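(* Let $\ell$ be a fixed positive integer. For every positive integer $k$, every finite graph $G$ and every set $A\subseteq V(G)$, the graph $G$ either contains $k$ pairwise vertex-disjoint long $A$-paths, or there is a vertex set $X\subseteq V(G)$ with $|X|\leq 4k\ell$ that meets every long $A$-path in $G$.
   Context: For a vertex set $A$, an $A$-path is a path with at least one edge whose two endvertices lie in $A$ and none of whose interior vertices lie in $A$. The length of a path is its number of edges. A path is long if its length is at least $\ell$. *)

(* Defs.v *)
From mathcomp Require Import all_boot.
Set Implicit Arguments. Unset Strict Implicit. Unset Printing Implicit Defensive.

(* A finite simple graph on the finType T is given by an adjacency relation
   e : rel T, assumed symmetric and irreflexive in the theorem. *)

Definition A_path (T : finType) (e : rel T) (A : {set T}) (p : seq T) : bool :=
  match p with
  | [::] => false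
  | x :: q =>
      [&& 0 < size q, path e x q, uniq (x :: q), x \in A, last x q \in A
        & all (fun v => v \notin A) (behead (belast x q))]
  end.

Definition path_length (T : Type) (p : seq T) : nat := (size p).-1.

Definition long_A_path (T : finType) (e : rel T) (A : {set T}) (l : nat)
    (p : seq T) : bool :=
  A_path e A p && (l <= path_length p).

Definition vdisjoint (T : eqType) (p q : seq T) : bool :=
  ~~ has (fun v => v \in q) p.

(* Main.v *)
Require Import Defs.
From mathcomp Require Import all_boot zify.
From Stdlib Require Import Classical.
Set Implicit Arguments. Unset Strict Implicit. Unset Printing Implicit Defensive.


Section Menger.
Variable T : finType.
Implicit Types (e : rel T) (S W M : {set T}) (p : seq T).

Definition warm e S W M p : Prop :=
  exists s mid m, p = s :: rcons mid m /\ s \in S /\ m \in M /\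
    all (fun x => x \in W) mid /\ path e s (rcons mid m).

Definition goodI S W M := forall x,
  (x \in S -> x \notin W) /\ (x \in S -> x \notin M) /\ (x \in W -> x \notin M).

Definition concl e S W M :=
  (exists p1 p2, warm e S W M p1 /\ warm e S W M p2 /\ vdisjoint p1 p2) \/
  (exists X : {set T}, #|X| <= 1 /\ forall p, warm e S W M p -> has (fun v => v \in X) p).

Lemma vdisjointP p q : reflect (forall x, x \in p -> x \notin q) (vdisjoint p q).
Proof. exact: hasPn. Qed.

Lemma vdisjointC p q : vdisjoint p q = vdisjoint q p.
Proof.
apply/vdisjointP/vdisjointP => H x xp; apply/negP => xq; by move: (H x xq); rewrite xp.
Qed.

Lemma split_first (x : T) s : x \in s -> exists s1 s2, s = s1 ++ x :: s2 /\ x \notin s1.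
Proof.
elim: s => // y s IH; rewrite inE; case: (eqVneq x y) => [<- _|nxy /= xs].
  by exists [::], s.
have [s1 [s2 [-> xs1]]] := IH xs; exists (y :: s1), s2; split => //.
by rewrite inE negb_or nxy.
Qed.

Lemma split_last (x : T) s : x \in s -> exists s1 s2, s = s1 ++ x :: s2 /\ x \notin s2.
Proof.
elim: s => // y s IH; rewrite inE; case: (boolP (x \in s)) => [xs _|xs].
  have [s1 [s2 [-> xs2]]] := IH xs; by exists (y :: s1), s2.
rewrite orbF => /eqP E; subst x; by exists [::], s.
Qed.

Lemma hitP (X : {set T}) (p : seq T) : reflect (exists2 x, x \in p & x \in X) (has (fun v => v \in X) p).
Proof. exact: hasP. Qed.

Lemma card_le1_eq (X : {set T}) x y : #|X| <= 1 -> x \in X -> y \in X -> x = y.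
Proof. by move=> /card_le1_eqP H xX yX; symmetry; exact: (H x y xX yX). Qed.

Lemma warm_base e S W M : goodI S W M ->
  (forall s w, s \in S -> w \in W -> ~~ e s w) -> concl e S W M.
Proof.
move=> hg noSW.
have shape : forall p, warm e S W M p -> exists s m, p = [:: s; m] /\ s \in S /\ m \in M.
  move=> p [s [[|w mid] [m [-> [sS [mM [allW pth]]]]]]].
    by exists s, m.
  move: allW pth => /= /andP [wW _] /andP [esw _].
  by move: (noSW s w sS wW); rewrite esw.
have disj2 : forall s m s' m', s \in S -> m \in M -> s' \in S -> m' \in M ->
    s != s' -> m != m' -> vdisjoint [:: s; m] [:: s'; m'].
  move=> s m s' m' sS mM s'S m'M ns nm.
  case: (hg s) => _ [/(_ sS) sM _]; case: (hg s') => _ [/(_ s'S) s'M _].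
  apply/vdisjointP => x; rewrite !inE => /orP [] /eqP ->; rewrite negb_or ?ns ?nm ?andbT //=.
    by apply/eqP => E; move: sM; rewrite E m'M.
  by apply/eqP => E; move: s'M; rewrite -E mM.
case: (classic (exists p, warm e S W M p)) => [[p0 hp0]|nop]; last first.
  right; exists set0; rewrite cards0; split => // p hp; exfalso; apply: nop; by exists p.
have [s1 [m1 [E0 [s1S m1M]]]] := shape _ hp0.
case: (classic (forall p, warm e S W M p -> s1 \in p)) => [alls1|].
  right; exists [set s1]; rewrite cards1; split => // p hp.
  by apply/hitP; exists s1; rewrite ?inE ?alls1.
move=> H; have [p' Hp'] := not_all_ex_not _ _ H; have [hp' /negP ns1] := imply_to_and _ _ Hp'.
have [s' [m' [E' [s'S m'M]]]] := shape _ hp'.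
move: ns1; rewrite E' !inE negb_or => /andP [ns1s' _].
have nss : s1 != s' := ns1s'.
case: (eqVneq m1 m') => [Em|nm]; last first.
  by left; exists p0, p'; rewrite E0 E'; split; [rewrite -E0|split; [rewrite -E'|apply: disj2]].
subst m'.
case: (classic (forall p, warm e S W M p -> m1 \in p)) => [allm1|].
  right; exists [set m1]; rewrite cards1; split => // p hp.
  by apply/hitP; exists m1; rewrite ?inE ?allm1.
move=> H'; have [p'' Hp''] := not_all_ex_not _ _ H'; have [hp'' /negP nm1] := imply_to_and _ _ Hp''.
have [s'' [m'' [E'' [s''S m''M]]]] := shape _ hp''.
move: nm1; rewrite E'' !inE negb_or => /andP [_ nm1m''].
have nmm : m'' != m1 by rewrite eq_sym.
case: (eqVneq s'' s') => [Es|ns].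
  subst s''; left; exists p0, p''; split => //; split => //; rewrite E0 E''.
  by apply: disj2.
left; exists p'', p'; split => //; split => //; rewrite E'' E'; by apply: disj2.
Qed.


Lemma warm_head e S W M p : warm e S W M p ->
  exists s0 q, p = s0 :: q /\ s0 \in S /\ forall x, x \in q -> x \in W \/ x \in M.
Proof.
move=> [s0 [mid [m [-> [sS [mM [allW _]]]]]]]; exists s0, (rcons mid m); split => //; split => //.
move=> x; rewrite mem_rcons inE => /orP [/eqP ->|xm]; first by right.
by left; move/allP: allW; apply.
Qed.

Lemma warm_S e S W M p x : goodI S W M -> warm e S W M p -> x \in p -> x \in S -> x = head x p.
Proof.
move=> hg /warm_head [s0 [q [-> [_ hq]]]]; rewrite inE => /orP [/eqP -> //|xq] xS.
case: (hg x) => [nW [nM _]]; case: (hq x xq) => H; exfalso.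
  by move: (nW xS); rewrite H.
by move: (nM xS); rewrite H.
Qed.

Lemma warm_notin e S W M p x : warm e S W M p -> x \notin S -> x \notin W -> x \notin M -> x \notin p.
Proof.
move=> /warm_head [s0 [q [-> [sS hq]]]] nS nW nM; rewrite inE negb_or; apply/andP; split.
  by apply/eqP => E; move: nS; rewrite E sS.
apply/negP => /hq [] H; [by move: nW; rewrite H | by move: nM; rewrite H].
Qed.

Lemma warm_sub e e' S W M S' W' M' p : subrel e e' -> {subset S <= S'} ->
  {subset W <= W'} -> {subset M <= M'} -> warm e S W M p -> warm e' S' W' M' p.
Proof.
move=> ee SS WW MM [s0 [mid [m [-> [sS [mM [allW pth]]]]]]].
exists s0, mid, m; split => //; split; first exact: SS.
split; first exact: MM.
split; last exact: sub_path pth.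
by apply/allP => x /(allP allW) /WW.
Qed.

Lemma warm_cases e S W M w p : goodI S W M -> w \in W -> warm e S W M p ->
  warm e S (W :\ w) M p \/
  exists mid2 m, w \notin mid2 /\ m \in M /\ all (fun x => x \in W) mid2 /\
    path e w (rcons mid2 m) /\ {subset (w :: rcons mid2 m) <= p}.
Proof.
move=> hg wW [s0 [mid [m [-> [sS [mM [allW pth]]]]]]].
case: (boolP (w \in mid)) => wmid; last first.
  left; exists s0, mid, m; split => //; split => //; split => //; split => //.
  apply/allP => x xmid; rewrite in_setD1 (allP allW _ xmid) andbT.
  by apply/eqP => E; move: wmid; rewrite -E xmid.
have [mid1 [mid2 [E nw]]] := split_last wmid.
right; exists mid2, m; split => //; split => //.
move: allW pth; rewrite E all_cat rcons_cat cat_path => /andP [_ /= /andP [_ a2]] /andP [_ /= /andP [_ p2]].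
split => //; split => //.
by move=> x; rewrite !inE mem_rcons !inE mem_cat !inE mem_rcons !inE => /orP [->|->]; rewrite ?orbT.
Qed.


Section Step.
Variables (e : rel T) (S W M : {set T}) (s w : T).
Hypotheses (hg : goodI S W M) (sS : s \in S) (wW : w \in W) (esw : e s w).
Let W' := W :\ w.
Definition econ : rel T := fun x y => e x y || (x == s) && e w y.

Lemma sub_econ : subrel e econ.
Proof. by move=> x y H; rewrite /econ H. Qed.

Lemma sW : s \notin W.
Proof. by case: (hg s) => [/(_ sS) H _]. Qed.
Lemma sM : s \notin M.
Proof. by case: (hg s) => [_ [/(_ sS) H _]]. Qed.
Lemma wS : w \notin S.
Proof. by apply/negP => H; move: (@sW); case: (hg w) => [/(_ H) H' _]; rewrite wW in H'. Qed.
Lemma wM : w \notin M.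
Proof. by case: (hg w) => [_ [_ /(_ wW) H]]. Qed.
Lemma W'W x : x \in W' -> x \in W.
Proof. by rewrite in_setD1 => /andP []. Qed.
Lemma wW' : w \notin W'.
Proof. by rewrite in_setD1 eqxx. Qed.

Lemma path_econ q : path e w q -> path econ s q.
Proof.
case: q => //= y q /andP [ewy pq]; rewrite /econ eqxx ewy orbT /=.
by apply: (sub_path sub_econ).
Qed.

Lemma lift p : warm econ S W' M p ->
  exists p', warm e S W M p' /\ forall x, x \in p' -> x \in p \/ (x = w /\ s \in p).
Proof.
move=> [s0 [mid [m [Ep [s0S [mM [allW pth]]]]]]].
have allW2 : all (fun x => x \in W) mid by apply/allP => x /(allP allW) /W'W.
have hq : all (fun x => x != s) (rcons mid m).
  apply/allP => x; rewrite mem_rcons inE => /orP [/eqP ->|xm].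
    by apply/eqP => E; move: sM; rewrite -E mM.
  apply/eqP => E; move: (allP allW _ xm); rewrite E => /W'W; by rewrite (negbTE sW).
move: pth hq; case Eq: (rcons mid m) => [|y q]; first by move: Eq; case: (mid).
move=> /= /andP [e0 pq] /andP [ys aq].
have pq' : path e y q.
  apply: (@sub_in_path _ (fun x => x != s) econ e _ y q) => //; last by rewrite /= ys.
  by move=> a b as_ _; rewrite /econ (negbTE as_) /= orbF.
move: e0; rewrite /econ => /orP [e0|/andP [/eqP E0 ewy]].
  exists p; split; last by move=> x ->; left.
  exists s0, mid, m; split => //; split => //; split => //; split => //.
  by rewrite Eq /= e0.
exists (s :: rcons (w :: mid) m); split.
  exists s, (w :: mid), m; split => //; split => //; split => //; split.
    by rewrite /= wW.
  by rewrite rcons_cons Eq /= esw ewy.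
move=> x; rewrite inE => /orP [/eqP ->|]; first by left; rewrite Ep E0 inE eqxx.
rewrite rcons_cons Eq inE => /orP [/eqP ->|xq]; first by right; rewrite Ep E0 inE eqxx.
by left; rewrite Ep inE Eq xq orbT.
Qed.


Lemma core (key : forall p, warm econ S W' M p -> s \in p) R :
  warm e S W M R -> s \notin R ->
  forall mida ma midb mb,
  all (fun x => x \in W') mida -> ma \in M -> path e s (rcons mida ma) ->
  all (fun x => x \in W') midb -> mb \in M -> path e w (rcons midb mb) ->
  vdisjoint (s :: rcons mida ma) (w :: rcons midb mb) ->
  exists p1 p2, warm e S W M p1 /\ warm e S W M p2 /\ vdisjoint p1 p2.
Proof.
move=> [s1 [mid [m [ER [s1S [mM [allW pth]]]]]]] nsR mida ma midb mb aa maM pa ab mbM pb dab.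
have s1s : s1 != s by apply/eqP => E; move: nsR; rewrite ER E inE eqxx.
have wmid : w \in mid.
  apply/negPn/negP => nw; move: nsR; rewrite key // ER.
  exists s1, mid, m; split => //; split => //; split => //; split; last first.
    by apply: (sub_path sub_econ).
  apply/allP => x xm; rewrite in_setD1 (allP allW _ xm) andbT.
  by apply/eqP => E; move: nw; rewrite -E xm.
have [mid1 [mid3 [Emid nw1]]] := split_first wmid.
move: pth allW; rewrite Emid rcons_cat cat_path all_cat => /andP [p1 /= /andP [el _]] /andP [a1 /andP [_ _]].
have sub : forall y midx mx, path e y (rcons midx mx) -> all (fun x => x \in W') midx ->
    mx \in M -> forall v, v \in mid1 -> v \in midx -> False.
  move=> y midx mx px ax mxM v vm vx.
  have [u1 [u2 [Eu _]]] := split_first vm.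
  have [x1 [x2 [Ex _]]] := split_first vx.
  have vW : v \in W by apply: (allP a1).
  have vW' : v \in W' by rewrite in_setD1 vW andbT; apply/eqP => E; move: nw1; rewrite -E vm.
  have : s \in s1 :: rcons (u1 ++ v :: x2) mx.
    apply: key; exists s1, (u1 ++ v :: x2), mx; split => //; split => //; split => //; split.
      rewrite all_cat /= vW' /=; apply/andP; split.
        apply/allP => x xu; rewrite in_setD1 (allP a1) ?Eu ?mem_cat ?xu // andbT.
        by apply/eqP => E; move: nw1; rewrite -E Eu mem_cat xu.
      by apply/allP => x xx; apply: (allP ax); rewrite Ex mem_cat inE xx !orbT.
    apply: (sub_path sub_econ); rewrite rcons_cat cat_path /=.
    move: p1 px; rewrite Eu cat_path /= Ex rcons_cat cat_path /= => /andP [-> /andP [-> _]] /andP [_ /andP [_ ->]].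
    by [].
  rewrite inE eq_sym (negbTE s1s) /= mem_rcons inE mem_cat inE.
  have sWb := sW; have sMb := sM.
  move=> /orP [/eqP E|]; first by move: sMb; rewrite E mxM.
  move=> /orP [H|/orP [/eqP E|H]].
  - by move: sWb; rewrite (allP a1) // Eu mem_cat H.
  - by move: sWb; rewrite E vW.
  - by move: sWb; rewrite W'W // (allP ax) // Ex mem_cat inE H !orbT.
exists (s :: rcons mida ma), (s1 :: rcons (mid1 ++ w :: midb) mb); split.
  exists s, mida, ma; split => //; split => //; split => //; split => //.
  by apply/allP => x /(allP aa) /W'W.
split.
  exists s1, (mid1 ++ w :: midb), mb; split => //; split => //; split => //; split.
    rewrite all_cat a1 /= wW /=; by apply/allP => x /(allP ab) /W'W.
  by rewrite rcons_cat cat_path p1 /= el.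
have dba : forall x, x \in w :: rcons midb mb -> x \notin s :: rcons mida ma.
  by apply/vdisjointP; rewrite vdisjointC.
rewrite vdisjointC; apply/vdisjointP => x; rewrite inE => /orP [/eqP ->|].
  rewrite inE negb_or s1s /= mem_rcons inE negb_or; apply/andP; split.
    by apply/eqP => E; case: (hg s1) => [_ [/(_ s1S) H _]]; move: H; rewrite E maM.
  apply/negP => /(allP aa) /W'W; case: (hg s1) => [/(_ s1S) H _]; by rewrite (negbTE H).
rewrite mem_rcons inE mem_cat => /orP [/eqP ->|/orP [xm|]].
- by apply: dba; rewrite inE mem_rcons !inE eqxx orbT.
- apply/negP => xa.
  have xW : x \in W by apply: (allP a1).
  move: xa; rewrite inE mem_rcons inE => /orP [/eqP E|/orP [/eqP E|xa]].
  + by move: sW; rewrite -E xW.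
  + by case: (hg x) => [_ [_ /(_ xW) H]]; move: H; rewrite E maM.
  + exact: (sub _ _ _ pa aa maM x xm xa).
- rewrite inE => /orP [/eqP ->|xb].
    by apply: dba; rewrite inE eqxx.
  by apply: dba; rewrite inE mem_rcons inE xb !orbT.
Qed.


Lemma step (IH : forall e0 S0 W0 M0, #|W0| < #|W| -> goodI S0 W0 M0 -> concl e0 S0 W0 M0) :
  concl e S W M.
Proof.
have cW : #|W'| < #|W| by rewrite (cardsD1 w W) wW.
have g1 : goodI S W' M.
  move=> x; case: (hg x) => [h1 [h2 h3]]; split; last split => //.
    by move=> xS; apply/negP => /W'W; apply/negP; exact: h1.
  by move=> /W'W; exact: h3.
case: (IH econ S W' M cW g1) => [[p1 [p2 [h1 [h2 d12]]]] | [X [cX hX]]].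
  left; have [q1 [hq1 m1]] := lift h1; have [q2 [hq2 m2]] := lift h2.
  exists q1, q2; split => //; split => //.
  have nw1 := warm_notin h1 wS wW' wM; have nw2 := warm_notin h2 wS wW' wM.
  have d := elimT (vdisjointP _ _) d12.
  apply/vdisjointP => x /m1 H1; apply/negP => /m2 H2.
  case: H1 H2 => [x1|[E1 s1]] [x2|[E2 s2]].
  - by move: (d _ x1); rewrite x2.
  - by move: nw1; rewrite -E2 x1.
  - by move: nw2; rewrite -E1 x2.
  - by move: (d _ s1); rewrite s2.
case: (boolP (s \in X)) => sX; last first.
  right; exists X; split => // p hp.
  case: (warm_cases hg wW hp) => [hp'|[mid2 [m [nw [mM [aW [pth sub]]]]]]].
    by apply: hX; apply: (warm_sub sub_econ) hp'.
  have : has (fun v => v \in X) (s :: rcons mid2 m).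
    apply: hX; exists s, mid2, m; split => //; split => //; split => //; split.
      apply/allP => x xm; rewrite in_setD1 (allP aW _ xm) andbT.
      by apply/eqP => E; move: nw; rewrite -E xm.
    exact: path_econ.
  move=> /hasP [z]; rewrite inE => /orP [/eqP ->|zm] zX; first by rewrite zX in sX.
  by apply/hasP; exists z => //; apply: sub; rewrite inE zm orbT.
have key : forall p, warm econ S W' M p -> s \in p.
  by move=> p /hX /hasP [z zp zX]; rewrite (card_le1_eq cX sX zX).
case: (classic (forall p, warm e S W M p -> s \in p)) => [alls|].
  right; exists [set s]; rewrite cards1; split => // p hp.
  by apply/hasP; exists s; rewrite ?inE ?alls.
move=> H; have [R HR] := not_all_ex_not _ _ H; have [hR /negP nsR] := imply_to_and _ _ HR.
have g2 : goodI [set s; w] W' M.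
  move=> x; case: (g1 x) => [_ [_ h3]]; split; last split => //;
    rewrite !inE => /orP [] /eqP ->.
  - by rewrite (negbTE sW) andbF.
  - by rewrite eqxx.
  - exact: sM.
  - exact: wM.
case: (IH e [set s; w] W' M cW g2) => [[R1 [R2 [h1 [h2 d12]]]] | [X' [cX' hX']]]; last first.
  right; exists X'; split => // p hp.
  case: (warm_cases hg wW hp) => [hp'|[mid2 [m [nw [mM [aW [pth sub]]]]]]].
    have sp : s \in p by apply: key; apply: (warm_sub sub_econ) hp'.
    have hs := warm_S hg hp sp sS.
    apply: hX'; move: hp' hs => [s0 [mid [m [Ep [_ [mM [aW pth]]]]]]]; rewrite Ep /= => ->.
    by exists s0, mid, m; split => //; split; [rewrite !inE eqxx | split].
  have : has (fun v => v \in X') (w :: rcons mid2 m).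
    apply: hX'; exists w, mid2, m; split => //; split; first by rewrite !inE eqxx orbT.
    split => //; split => //.
    apply/allP => x xm; rewrite in_setD1 (allP aW _ xm) andbT.
    by apply/eqP => E; move: nw; rewrite -E xm.
  by move=> /hasP [z /sub zp zX]; apply/hasP; exists z.
move: h1 h2 d12 => [r1 [mid1 [m1 [E1 [r1S [m1M [a1 pt1]]]]]]] [r2 [mid2 [m2 [E2 [r2S [m2M [a2 pt2]]]]]]].
rewrite E1 E2 => d12.
have r12 : r1 != r2.
  by apply/eqP => E; move/vdisjointP: d12 => /(_ r1); rewrite !inE eqxx E eqxx => /(_ isT).
move: r1S r2S r12 pt1 pt2 d12; rewrite !inE => /orP [] /eqP -> /orP [] /eqP -> //; rewrite ?eqxx // => _ pt1 pt2 d12.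
  left; exact: (core key hR nsR a1 m1M pt1 a2 m2M pt2 d12).
by rewrite vdisjointC in d12; left; exact: (core key hR nsR a2 m2M pt2 a1 m1M pt1 d12).
Qed.

End Step.

Lemma menger2 n : forall e S W M, #|W| <= n -> goodI S W M -> concl e S W M.
Proof.
elim: n => [|n IH] e S W M cW hg.
  apply: warm_base => // s w _ wW; exfalso.
  by move: cW; rewrite leqn0 => /eqP /card0_eq /(_ w); rewrite wW.
case: (classic (exists s w, s \in S /\ w \in W /\ e s w)) => [[s [w [sS [wW esw]]]]|H].
  apply: (step hg sS wW esw) => e0 S0 W0 M0 c0 g0; apply: IH => //.
  by rewrite -ltnS; apply: leq_trans c0 cW.
apply: warm_base => // s w sS wW; apply/negP => esw; apply: H; by exists s, w.
Qed.

End Menger.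

Section APaths.
Variables (T : finType) (e : rel T) (A : {set T}).
Hypothesis esym : symmetric e.

Definition APc p := exists x q, p = x :: q /\ 0 < size q /\ path e x q /\ uniq (x :: q) /\
  x \in A /\ last x q \in A /\ (forall z, z \in q -> z \in A -> z = last x q).

Lemma APchar p : A_path e A p <-> APc p.
Proof.
split.
  case: p => // x q /andP [sq /and5P [pth un xA lA intr]]; exists x, q; do 6 split => //.
  move: sq un intr pth lA; case/lastP: q => // q' z _ un; rewrite belast_rcons last_rcons /= => intr _ _.
  move=> z0; rewrite mem_rcons inE => /orP [/eqP -> //|zq zA].
  by move: (allP intr _ zq); rewrite zA.
move=> [x [q [-> [sq [pth [un [xA [lA intr]]]]]]]]; rewrite /A_path sq pth un xA lA /=.
move: sq un intr pth lA; case/lastP: q => // q' z _; rewrite belast_rcons last_rcons /= => un intr _ _.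
apply/allP => z0 zq; apply/negP => zA.
have := intr z0; rewrite mem_rcons inE zq orbT => /(_ isT zA) E.
by move: un; rewrite rcons_uniq -E zq /= andbF.
Qed.

Lemma AP_rev p : A_path e A p -> A_path e A (rev p).
Proof.
move=> /APchar [x [q [-> [sq [pth [un [xA [lA intr]]]]]]]]; apply/APchar.
move: sq pth un lA intr; case/lastP: q => // q' z _; rewrite last_rcons => pth un zA intr.
exists z, (rcons (rev q') x); rewrite rev_cons rev_rcons; split => //.
split; first by rewrite size_rcons.
split.
  have H := rev_path e x (rcons q' z); rewrite last_rcons belast_rcons rev_cons in H.
  by rewrite H (@eq_path _ _ e) // => a b; apply: esym.
split.
  have -> : z :: rcons (rev q') x = rev (x :: rcons q' z) by rewrite rev_cons rev_rcons.
  by rewrite rev_uniq.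
split => //; split; first by rewrite last_rcons.
move=> z0; rewrite last_rcons mem_rcons inE mem_rev => /orP [/eqP -> //|zq z0A].
have E := intr z0; rewrite mem_rcons inE zq orbT in E; have E' := E isT z0A.
by move: un => /= /andP [_]; rewrite rcons_uniq -E' zq.
Qed.


Lemma AP_split s1 v s2 : A_path e A (s1 ++ v :: s2) ->
  [/\ path e v s2, uniq (v :: s2), last v s2 \in A,
     (forall z, z \in s2 -> z \in A -> z = last v s2) &
     (forall z, z \in s1 -> z \notin v :: s2)].
Proof.
move=> /APchar [x [q [E [sq [pth [un [xA [lA intr]]]]]]]].
case: s1 E => [|y s1] /= [Ex Eq].
  subst x q; split => //; by move=> z; rewrite in_nil.
subst y q; move: pth un lA intr; rewrite cat_path last_cat /= => /andP [_ /andP [evs ps2]].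
move=> /andP [xn]; rewrite cat_uniq => /and3P [_ hn u2] lA intr.
split => //.
  by move=> z zs zA; apply: intr => //; rewrite mem_cat inE zs !orbT.
move=> z; rewrite inE => /orP [/eqP ->|zs].
  by apply/negP => xv; move: xn; rewrite mem_cat xv orbT.
apply/negP => zv; move/hasPn: hn => /(_ z zv); by rewrite zs.
Qed.

Lemma AP_ends x q z : A_path e A (x :: q) -> z \in x :: q -> z \in A -> z = x \/ z = last x q.
Proof.
move=> /APchar [x' [q' [[Ex Eq] [_ [_ [_ [_ [_ intr]]]]]]]]; subst x' q'.
rewrite inE => /orP [/eqP -> _|zq zA]; [by left | by right; apply: intr].
Qed.

Lemma construct l s1 v s2 a mid : A_path e A (s1 ++ v :: s2) -> v \notin A ->
  l <= size s2 -> a \in A -> a \notin s1 ++ v :: s2 ->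
  (forall z, z \in mid -> z \notin A /\ z \notin s1 ++ v :: s2) ->
  uniq (a :: mid) -> path e a (rcons mid v) -> long_A_path e A l (a :: mid ++ v :: s2).
Proof.
move=> hP vA ls2 aA aP hmid umid pa.
have [ps2 u2 lA intr _] := AP_split hP.
apply/andP; split; last by rewrite /path_length /= size_cat /=; lia.
apply/APchar; exists a, (mid ++ v :: s2); split => //.
split; first by rewrite size_cat /= addnS.
split; first by rewrite -cat_rcons cat_path last_rcons pa.
split.
  move: umid => /= /andP [am um].
  have ha : a \notin mid ++ v :: s2.
    rewrite mem_cat negb_or am /=; apply/negP => av; move: aP; by rewrite mem_cat av orbT.
  have hh : ~~ has (fun z => z \in mid) (v :: s2).
    apply/hasPn => z zv; apply/negP => zm; have [_ zP] := hmid z zm.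
    by move: zP; rewrite mem_cat zv orbT.
  by rewrite /= cat_uniq u2 um hh ha.
split => //; split; first by rewrite last_cat /=.
rewrite last_cat /= => z; rewrite mem_cat => /orP [zm zA|].
  by have [H _] := hmid z zm; move: H; rewrite zA.
rewrite inE => /orP [/eqP -> vA'|zs zA]; first by move: vA; rewrite vA'.
exact: intr.
Qed.

End APaths.

Section Fam.
Variables (T : finType) (e : rel T) (A : {set T}) (l : nat).
Hypotheses (esym : symmetric e) (hl : 0 < l).

Definition goodF (F : seq (seq T)) := uniq F /\ (forall P, P \in F -> long_A_path e A l P) /\
  (forall P Q, P \in F -> Q \in F -> P != Q -> vdisjoint P Q).
Definition UF (F : seq (seq T)) : {set T} := [set x | has (fun P => x \in P) F].
Definition EP (P : seq T) : {set T} := [set x in take l P] :|: [set x in drop (size P - l) P].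
Definition MP (P : seq T) : {set T} := [set x in P] :\: EP P.

Lemma lap_nonnil P : long_A_path e A l P -> P != [::].
Proof. by case: P. Qed.

Lemma disj_neq (P Q : seq T) : P != [::] -> vdisjoint P Q -> P != Q.
Proof.
case: P => // x P _ /vdisjointP /(_ x); rewrite inE eqxx => /(_ isT) H.
by apply/eqP => E; move: H; rewrite -E inE eqxx.
Qed.

Lemma inU (F : seq (seq T)) (P : seq T) (x : T) : P \in F -> x \in P -> x \in UF F.
Proof. by move=> PF xP; rewrite inE; apply/hasP; exists P. Qed.

Lemma inUP (F : seq (seq T)) (x : T) : x \in UF F -> exists2 P, P \in F & x \in P.
Proof. by rewrite inE => /hasP. Qed.

Lemma good_cons (F : seq (seq T)) (Q : seq T) : goodF F -> long_A_path e A l Q ->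
  (forall P, P \in F -> vdisjoint Q P) -> goodF (Q :: F).
Proof.
move=> [uF [lF dF]] lQ dQ; split.
  rewrite /= uF andbT; apply/negP => QF.
  by move: (disj_neq (lap_nonnil lQ) (dQ _ QF)); rewrite eqxx.
split; first by move=> P; rewrite inE => /orP [/eqP ->|/lF].
move=> P R; rewrite !inE => /orP [/eqP ->|PF] /orP [/eqP ->|RF]; rewrite ?eqxx //.
- by move=> _; apply: dQ.
- by move=> _; rewrite vdisjointC; apply: dQ.
- by apply: dF.
Qed.

Lemma good_rem (F : seq (seq T)) (P : seq T) : goodF F -> goodF (rem P F).
Proof.
move=> [uF [lF dF]]; split; first exact: rem_uniq.
split; first by move=> Q /mem_rem /lF.
by move=> Q R /mem_rem QF /mem_rem RF; apply: dF.
Qed.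

Lemma EP_card (P : seq T) : #|EP P| <= 2 * l.
Proof.
rewrite cardsU !cardsE.
have h1 := card_size (take l P); have h2 := card_size (drop (size P - l) P).
rewrite size_take size_drop in h1 h2.
have H : #|take l P| <= l by apply: leq_trans h1 _; case: ifP => // /negbT; rewrite -leqNgt.
apply: leq_trans (leq_subr _ _) _; rewrite mulSn mul1n; apply: leq_add => //.
apply: leq_trans h2 _; lia.
Qed.

Lemma EP_ends (P : seq T) z : long_A_path e A l P -> z \in P -> z \in A -> z \in EP P.
Proof.
case: P => // x q /andP [hP _] zP zA; have [->|->] := AP_ends hP zP zA; rewrite inE.
  by apply/orP; left; rewrite inE; case: l hl => //= n _; rewrite inE eqxx.
apply/orP; right; rewrite inE.
rewrite lastI drop_rcons ?mem_rcons ?inE ?eqxx //.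
by rewrite size_rcons size_belast; lia.
Qed.

Lemma MP_notA (P : seq T) z : long_A_path e A l P -> z \in MP P -> z \notin A.
Proof.
move=> hP; rewrite inE inE => /andP [nE zP]; apply/negP => zA.
by move: nE; rewrite (EP_ends hP zP zA).
Qed.

Lemma in_drop_tail (s1 s2 : seq T) v : size s2 < l -> v \in drop (size (s1 ++ v :: s2) - l) (s1 ++ v :: s2).
Proof.
move=> h; rewrite drop_cat size_cat /=.
case: ifP => [_|/negbT]; first by rewrite mem_cat inE eqxx orbT.
rewrite -leqNgt => H; have -> : size s1 + (size s2).+1 - l - size s1 = 0 by lia.
by rewrite drop0 inE eqxx.
Qed.

Lemma MP_pos (P : seq T) s1 v s2 : P = s1 ++ v :: s2 -> v \in MP P -> l <= size s2.
Proof.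
move=> EP_ vM; rewrite leqNgt; apply/negP => h.
move: vM; rewrite !inE negb_or => /andP [/andP [_ /negP H] _]; apply: H.
rewrite EP_; exact: in_drop_tail.
Qed.

Lemma MP_pos_rev (P : seq T) t1 v t2 : rev P = t1 ++ v :: t2 -> v \in MP P -> l <= size t2.
Proof.
move=> EP_ vM; rewrite leqNgt; apply/negP => h.
move: vM; rewrite !inE negb_or => /andP [/andP [/negP H _] _]; apply: H.
have := in_drop_tail t1 v h; rewrite -EP_ drop_rev size_rev mem_rev => H.
case: (leqP l (size P)) => hs; last first.
  by rewrite take_oversize ?(ltnW hs) //; apply: mem_take H.
have E : size P - (size P - l) = l by lia.
by rewrite E in H.
Qed.

End Fam.

Lemma shorten_ex (T : eqType) (e : rel T) x p : path e x p ->
  exists p', [/\ path e x p', uniq (x :: p'), {subset p' <= p} & last x p' = last x p].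
Proof. by move=> H; case: (shortenP H) => p' a b c; exists p'. Qed.

Section Aug.
Variables (T : finType) (e : rel T) (A : {set T}) (l : nat).
Hypotheses (esym : symmetric e) (hl : 0 < l).
Variables (F : seq (seq T)) (P : seq T).
Hypotheses (gF : goodF e A l F) (PF : P \in F).

Let U := UF F.
Let S := A :\: U.
Let W := ~: (A :|: U).
Let M := MP l P.

Lemma PU x : x \in P -> x \in U.
Proof. exact: inU. Qed.

Lemma MPP x : x \in M -> x \in P.
Proof. by rewrite !inE => /andP [_]. Qed.

Lemma gI : goodI S W M.
Proof.
move=> x; split; last split.
- by rewrite in_setD in_setC in_setU => /andP [_ ->].
- by rewrite in_setD => /andP [nU _]; apply/negP => /MPP /PU; rewrite (negbTE nU).
- by rewrite in_setC in_setU negb_or => /andP [_ nU]; apply/negP => /MPP /PU; rewrite (negbTE nU).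
Qed.

Definition armP a mid v := [/\ a \in A /\ a \notin U, (forall z, z \in mid -> z \notin A /\ z \notin U),
  uniq (a :: mid), path e a (rcons mid v) & v \in M].

Lemma warm_arm R : warm e S W M R ->
  exists a mid v, armP a mid v /\ {subset a :: rcons mid v <= R}.
Proof.
move=> [s0 [mid [m [ER [s0S [mM [aW pth]]]]]]].
have [p' [pth' up' sub' El]] := shorten_ex pth.
rewrite last_rcons in El.
move: pth' up' sub' El; case/lastP: p' => [_ _ _ /= E|mid' m'].
  by case: (gI s0) => [_ [/(_ s0S) H _]]; move: H; rewrite E mM.
rewrite last_rcons => pth' up' sub' E; subst m'.
have sub2 : {subset mid' <= mid}.
  move=> z zm; have := sub' z; rewrite !mem_rcons !inE zm orbT => /(_ isT) /orP [/eqP E|//].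
  by move: up'; rewrite /= rcons_uniq -E zm /= andbF.
exists s0, mid', m; split.
  move: s0S; rewrite in_setD => /andP [nU s0A]; split => //.
  - move=> z /sub2 /(allP aW); by rewrite !inE negb_or => /andP [].
  - move: up'; rewrite /= mem_rcons inE negb_or rcons_uniq => /andP [/andP [_ ->] /andP [_ ->]].
    done.
move=> z; rewrite ER !inE !mem_rcons !inE => /or3P [->//|->|zm]; first by rewrite orbT.
by rewrite sub2 ?orbT.
Qed.

Lemma armU a mid v x : armP a mid v -> x \in a :: rcons mid v -> x = v \/ x \notin U.
Proof.
move=> [[aA aU] hm _ _ _]; rewrite inE mem_rcons inE => /or3P [/eqP ->|/eqP ->|xm].
- by right.
- by left.
- by right; case: (hm x xm).
Qed.

Lemma memA (x a v : T) (mid s : seq T) : (x \in a :: mid ++ v :: s) = (x \in a :: rcons mid v) || (x \in s).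
Proof.
rewrite !inE mem_cat mem_rcons !inE.
by case: (x == a); case: (x == v); case: (x \in mid); case: (x \in s).
Qed.


Lemma aug_core s1 s2 a1 mid1 v1 a2 mid2 v2 : P = s1 ++ v2 :: s2 -> v1 \in s1 ->
  armP a1 mid1 v1 -> armP a2 mid2 v2 ->
  vdisjoint (a1 :: rcons mid1 v1) (a2 :: rcons mid2 v2) ->
  exists F', goodF e A l F' /\ size F' = (size F).+1.
Proof.
move=> EP_ v1s h1 h2 d12.
have [uF [lF dF]] := gF.
have lP := lF P PF; have hP : A_path e A P by case/andP: lP.
have hP' : A_path e A (s1 ++ v2 :: s2) by rewrite -EP_.
have [_ _ _ _ s1s2] := AP_split hP'.
have P2l : long_A_path e A l (a2 :: mid2 ++ v2 :: s2).
  case: h2 => [[aA aU] hm um pa vM].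
  apply: (construct (s1 := s1)) => //.
  - by apply: (MP_notA hl lP).
  - by apply: (MP_pos hl EP_).
  - by rewrite -EP_; apply/negP => /PU; rewrite (negbTE aU).
  - move=> z zm; case: (hm z zm) => zA zU; split => //.
    by rewrite -EP_; apply/negP => /PU; rewrite (negbTE zU).
have v1r : v1 \in rev s1 by rewrite mem_rev.
have [t1 [t2 [Et _]]] := split_first v1r.
have ErP : rev P = (rev s2 ++ v2 :: t1) ++ v1 :: t2.
  by rewrite EP_ rev_cat rev_cons -cats1 -!catA /= -Et.
have P1l : long_A_path e A l (a1 :: mid1 ++ v1 :: t2).
  case: h1 => [[aA aU] hm um pa vM].
  apply: (construct (s1 := rev s2 ++ v2 :: t1)) => //.
  - by rewrite -ErP; apply: (AP_rev esym).
  - by apply: (MP_notA hl lP).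
  - by apply: (MP_pos_rev hl ErP).
  - by rewrite -ErP mem_rev; apply/negP => /PU; rewrite (negbTE aU).
  - move=> z zm; case: (hm z zm) => zA zU; split => //.
    by rewrite -ErP mem_rev; apply/negP => /PU; rewrite (negbTE zU).
have t2s1 : {subset t2 <= s1}.
  by move=> x xt; rewrite -mem_rev Et mem_cat inE xt !orbT.
have v1P : v1 \in P by rewrite EP_ mem_cat v1s.
have s1P : {subset s1 <= P} by move=> x xs; rewrite EP_ mem_cat xs.
have s2P : {subset s2 <= P} by move=> x xs; rewrite EP_ mem_cat inE xs !orbT.
have d12' := elimT (vdisjointP _ _) d12.
have dP12 : vdisjoint (a1 :: mid1 ++ v1 :: t2) (a2 :: mid2 ++ v2 :: s2).
  apply/vdisjointP => x; rewrite !memA => /orP [xR1|xt2]; rewrite negb_or; apply/andP; split.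
  - exact: d12'.
  - case: (armU h1 xR1) => [->|xU].
      by apply/negP => vs2; move: (s1s2 v1 v1s); rewrite inE vs2 orbT.
    by apply/negP => /s2P /PU; rewrite (negbTE xU).
  - apply/negP => xR2; case: (armU h2 xR2) => [E|xU].
      by move: (s1s2 x (t2s1 _ xt2)); rewrite E inE eqxx.
    by move: xU; rewrite PU // s1P // t2s1.
  - by apply/negP => xs2; move: (s1s2 x (t2s1 _ xt2)); rewrite inE xs2 orbT.
have dQ : forall (a : T) mid v s, armP a mid v -> {subset s <= P} ->
    forall Q, Q \in rem P F -> vdisjoint (a :: mid ++ v :: s) Q.
  move=> a mid v s ha sP Q; rewrite (mem_rem_uniq _ uF) inE => /andP [QP QF].
  have dPQ := elimT (vdisjointP _ _) (dF _ _ PF QF (_ : P != Q)); rewrite eq_sym in dPQ; have {}dPQ := dPQ QP.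
  apply/vdisjointP => x; rewrite memA => /orP [xR|xs].
    case: (armU ha xR) => [->|xU]; first by apply: dPQ; case: ha => _ _ _ _ /MPP.
    by apply/negP => xQ; move: xU; rewrite (inU QF xQ).
  by apply: dPQ; apply: sP.
exists ((a1 :: mid1 ++ v1 :: t2) :: (a2 :: mid2 ++ v2 :: s2) :: rem P F); split.
  apply: good_cons => //.
    apply: good_cons => //; first exact: good_rem.
    by apply: dQ.
  move=> Q; rewrite inE => /orP [/eqP ->//|]; apply: dQ => //.
  by move=> x /t2s1 /s1P.
rewrite /= size_rem //; by case: (F) PF.
Qed.


Lemma aug R1 R2 : warm e S W M R1 -> warm e S W M R2 -> vdisjoint R1 R2 ->
  exists F', goodF e A l F' /\ size F' = (size F).+1.
Proof.
move=> w1 w2 d.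
have [a1 [mid1 [v1 [h1 sub1]]]] := warm_arm w1.
have [a2 [mid2 [v2 [h2 sub2]]]] := warm_arm w2.
have d' : vdisjoint (a1 :: rcons mid1 v1) (a2 :: rcons mid2 v2).
  apply/vdisjointP => x /sub1 x1; apply/negP => /sub2 x2.
  by move: (elimT (vdisjointP _ _) d x x1); rewrite x2.
have v1a : v1 \in a1 :: rcons mid1 v1 by rewrite inE mem_rcons inE eqxx orbT.
have v2a : v2 \in a2 :: rcons mid2 v2 by rewrite inE mem_rcons inE eqxx orbT.
have n12 : v1 != v2.
  by apply/eqP => E; move: (elimT (vdisjointP _ _) d' v1 v1a); rewrite E v2a.
have v1P : v1 \in P by case: h1 => _ _ _ _ /MPP.
have v2P : v2 \in P by case: h2 => _ _ _ _ /MPP.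
have [s1 [s2 [EP_ _]]] := split_first v2P.
move: (v1P); rewrite EP_ mem_cat inE (negbTE n12) /= => /orP [v1s|v1s].
  exact: (aug_core EP_ v1s h1 h2 d').
have [u1 [u2 [Es _]]] := split_first v1s.
have EP2 : P = (s1 ++ v2 :: u1) ++ v1 :: u2 by rewrite EP_ Es -catA.
have v2s : v2 \in s1 ++ v2 :: u1 by rewrite mem_cat inE eqxx orbT.
rewrite vdisjointC in d'.
exact: (aug_core EP2 v2s h2 h1 d').
Qed.

End Aug.

Lemma ex_max (Pn : nat -> Prop) B : Pn 0 -> (forall n, Pn n -> n <= B) ->
  exists n, Pn n /\ forall m, Pn m -> m <= n.
Proof.
move=> P0; elim: B => [|B IH] hB.
  by exists 0; split => // m /hB.
case: (classic (Pn B.+1)) => [HB|nB]; first by exists B.+1; split => // m /hB.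
apply: IH => n Pn_n; have := hB n Pn_n; rewrite leq_eqVlt => /orP [/eqP E|//].
by move: Pn_n; rewrite E.
Qed.

Lemma collect (T : finType) (F : seq (seq T)) (c : nat) (Q : seq T -> {set T} -> Prop) :
  (forall P (Y Z : {set T}), Q P Y -> Y \subset Z -> Q P Z) ->
  (forall P, P \in F -> exists Y : {set T}, #|Y| <= c /\ Q P Y) ->
  exists X : {set T}, #|X| <= c * size F /\ forall P, P \in F -> Q P X.
Proof.
move=> mono; elim: F => [|P F IH] H.
  by exists set0; rewrite cards0; split => // P; rewrite in_nil.
have [Y [cY QY]] := H P (mem_head _ _).
have [X [cX QX]] : exists X : {set T}, #|X| <= c * size F /\ forall P, P \in F -> Q P X.
  by apply: IH => P' P'F; apply: H; rewrite inE P'F orbT.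
exists (Y :|: X); split.
  rewrite cardsU /= mulnS; apply: leq_trans (leq_subr _ _) _; exact: leq_add.
move=> P'; rewrite inE => /orP [/eqP ->|P'F].
  by apply: mono QY _; apply: subsetUl.
by apply: mono (QX _ P'F) _; apply: subsetUr.
Qed.

Lemma split_pred (T : eqType) (a : pred T) s : has a s ->
  exists s1 y s2, s = s1 ++ y :: s2 /\ a y /\ ~~ has a s1.
Proof.
elim: s => // x s IH /=; case: (boolP (a x)) => ax /=.
  by move=> _; exists [::], x, s.
move=> /IH [s1 [y [s2 [-> [ay n1]]]]]; exists (x :: s1), y, s2; split => //; split => //.
by rewrite /= negb_or ax.
Qed.

Unset Implicit Arguments.
Theorem theorem6 (l : nat) (hl : 0 < l) (k : nat) (hk : 0 < k)
    (T : finType) (e : rel T) (esym : symmetric e) (eirr : irreflexive e)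
    (A : {set T}) :
  (exists P : 'I_k -> seq T,
      (forall i, long_A_path e A l (P i)) /\
      (forall i j, i != j -> vdisjoint (P i) (P j)))
  \/
  (exists X : {set T}, #|X| <= 4 * k * l /\
      forall p : seq T, long_A_path e A l p -> has (fun v => v \in X) p).
Proof.
case: (classic (exists F, goodF e A l F /\ k <= size F)) => [[F [[uF [lF dF]] kF]]|noF].
  left; exists (fun i => nth [::] F i); split.
    by move=> i; apply: lF; apply: mem_nth; apply: leq_trans (ltn_ord i) kF.
  move=> i j nij; apply: dF; try (apply: mem_nth; apply: leq_trans (ltn_ord _) kF).
  rewrite nth_uniq //; try (apply: leq_trans (ltn_ord _) kF).
right.
have bound : forall F, goodF e A l F -> size F <= k.-1.
  move=> F gF; rewrite -ltnS prednK //; rewrite ltnNge; apply/negP => kF; apply: noF; by exists F.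
pose Pn := fun n => exists F, goodF e A l F /\ size F = n.
have P0 : Pn 0.
  by exists [::]; split => //; split => //; split => // P; rewrite in_nil.
have Pb : forall n, Pn n -> n <= k.-1 by move=> n [F [gF <-]]; exact: bound.
have [r [[F [gF EF]] rmax]] := ex_max P0 Pb.
subst r.
set U := UF F.
pose Qp := fun (P : seq T) (Y : {set T}) => EP l P \subset Y /\
  forall R, warm e (A :\: U) (~: (A :|: U)) (MP l P) R -> has (fun v => v \in Y) R.
have mono : forall P (Y Z : {set T}), Qp P Y -> Y \subset Z -> Qp P Z.
  move=> P Y Z [h1 h2] YZ; split; first exact: subset_trans h1 YZ.
  move=> R /h2 /hasP [x xR xY]; apply/hasP; exists x => //; exact: (subsetP YZ).
have hY : forall P, P \in F -> exists Y : {set T}, #|Y| <= (2 * l).+1 /\ Qp P Y.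
  move=> P PF.
  case: (@menger2 _ #|~: (A :|: U)| e (A :\: U) (~: (A :|: U)) (MP l P) (leqnn _) (gI A l PF))
    => [[R1 [R2 [w1 [w2 d12]]]]|[X [cX hX]]].
    have [F' [gF' sF']] := aug esym hl gF PF w1 w2 d12.
    by have := rmax _ (ex_intro _ F' (conj gF' sF')); rewrite ltnn.
  exists (EP l P :|: X); split.
    rewrite cardsU; apply: leq_trans (leq_subr _ _) _.
    by rewrite -addn1; apply: leq_add => //; apply: EP_card.
  split; first exact: subsetUl.
  move=> R /hX /hasP [x xR xX]; apply/hasP; exists x => //; by rewrite in_setU xX orbT.
have [X [cX QX]] := collect mono hY.
exists X; split.
  apply: leq_trans cX _; have := bound F gF; move: (size F) => n hn.
  nia.
move=> Q lQ; apply/negPn/negP => nh; move/hasPn: nh => nh.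
have [uF [lF dF]] := gF.
case: (boolP (has (fun x => x \in U) Q)) => hU; last first.
  have gQ : goodF e A l (Q :: F).
    apply: good_cons => // P PF; apply/vdisjointP => x xQ; apply/negP => xP.
    by move/hasPn: hU => /(_ x xQ); rewrite (inU PF xP).
  by have := rmax _ (ex_intro _ (Q :: F) (conj gQ erefl)); rewrite ltnn.
have [Q1 [y [Q2 [EQ [yU nQ1]]]]] := split_pred hU.
have [P PF yP] := inUP yU.
have yQ : y \in Q by rewrite EQ mem_cat inE eqxx orbT.
have yX : y \notin X := nh y yQ.
have [hEP hArm] := QX P PF.
move: lQ; rewrite EQ; case: Q1 EQ nQ1 => [|x Q1'] EQ nQ1 /= lQ.
  have yA : y \in A by case/andP: lQ => /APchar [x [q [[<- _] [_ [_ [_ [yA _]]]]]]].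
  by move: yX; rewrite (subsetP hEP) // (EP_ends hl (lF P PF) yP yA).
have yM : y \in MP l P.
  rewrite in_setD inE yP andbT; apply/negP => yE; by move: yX; rewrite (subsetP hEP).
case/andP: lQ => /APchar [x0 [q [[Ex Eq] [_ [pth [un [xA [_ intr]]]]]]]] _.
subst x0 q.
have := hArm (x :: rcons Q1' y).
have sub : {subset x :: rcons Q1' y <= Q}.
  by move=> z zR; rewrite EQ -cat_rcons rcons_cons mem_cat zR.
have harm : warm e (A :\: U) (~: (A :|: U)) (MP l P) (x :: rcons Q1' y).
  exists x, Q1', y; split => //; split.
    rewrite in_setD xA andbT; apply/negP => xU; by move: nQ1; rewrite /= xU.
  split => //; split; last by move: pth; rewrite -cat_rcons cat_path => /andP [].
  apply/allP => z zQ; rewrite in_setC in_setU negb_or; apply/andP; split; last first.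
    by apply/negP => zU; move: nQ1; rewrite /= (introT hasP (ex_intro2 _ _ z zQ zU)) orbT.
  apply/negP => zA.
  have zq : z \in Q1' ++ y :: Q2 by rewrite mem_cat zQ.
  have E := intr z zq zA.
  move: un; rewrite /= cat_uniq => /andP [_ /and3P [_ /hasPn H _]].
  rewrite last_cat /= in E; have := H _ (mem_last y Q2); by rewrite -E zQ.
move=> /(_ harm) /hasP [z zR zX].
by move: (nh z (sub z zR)); rewrite zX.
Qed.
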